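(* If $R$ is an affine ternary relation and $\sigma$ is a permutation of $\mathcal M$ preserving $R$, then $\sigma\in AGL(\mathcal M)$.
   Context: $\mathcal M$ denotes the $\mathbb Q$-vector space $\mathbb Q^{<\omega}$ of all sequences of rationals with only finitely many nonzero terms, with zero vector $\vec 0$. A relation is definable if it is first-order definable without parameters in $\langle\mathcal M;+\rangle$. A permutation $\sigma$ preserves a ternary relation $R$ if $R(a,b,c)\iff R(\sigma a,\sigma b,\sigma c)$ for all $a,b,c$. $AGL(\mathcal M)$ is the group of maps $x\mapsto A x+v$ with $A$ an invertible $\mathbb Q$-linear map of $\mathcal M$ and $v\in\mathcal M$. A ternary relation $R(x,y,z)$ has table $T$, where $T\subset\mathbb Q^2$ is finite, if for all linearly independent $x,y$ and all $z$: $R(x,y,z)\iff z=px+qy$ for some $(p,q)\in T$. A definable ternary relation $R$ is affine if it has a nonempty table $T$ such that every $(p,q)\in T$ satisfies $p\ne0$, $q\ne0$, $p+q=1$, and moreover for all $x,y,z\in\mathcal M$: if $x\ne y$ and $R(x,y,z)$ then $z\in\{x+t(y-x):t\in\mathbb Q\}$, and if $R(x,x,z)$ then $z=x$. *)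

(* Defs.v *)
From HB Require Import structures.
From mathcomp Require Import all_boot all_order all_algebra.
Set Implicit Arguments. Unset Strict Implicit. Unset Printing Implicit Defensive.
Import Order.TTheory GRing.Theory Num.Theory.
Local Open Scope ring_scope.

(* The Q-vector space M = Q^{<omega} of finitely supported rational sequences,
   represented by {poly rat}: a polynomial is exactly its finitely supported
   coefficient sequence; only its additive group and Q-scaling are used. *)
Notation M := {poly rat}.

Inductive term : Type :=
| TVar : nat -> term
| TPlus : term -> term -> term.

Inductive formula : Type :=
| FEq : term -> term -> formula
| FNot : formula -> formula
| FAnd : formula -> formula -> formula
| FOr : formula -> formula -> formula
| FImp : formula -> formula -> formula
| FEx : nat -> formula -> formula
| FAll : nat -> formula -> formula.

Fixpoint teval (e : nat -> M) (t : term) : M :=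
  match t with
  | TVar i => e i
  | TPlus t1 t2 => teval e t1 + teval e t2
  end.

Definition upd (e : nat -> M) (i : nat) (x : M) : nat -> M :=
  fun j => if j == i then x else e j.

Fixpoint sat (e : nat -> M) (f : formula) : Prop :=
  match f with
  | FEq t1 t2 => teval e t1 = teval e t2
  | FNot g => ~ sat e g
  | FAnd g h => sat e g /\ sat e h
  | FOr g h => sat e g \/ sat e h
  | FImp g h => sat e g -> sat e h
  | FEx i g => exists x : M, sat (upd e i x) g
  | FAll i g => forall x : M, sat (upd e i x) g
  end.

Definition definable3 (R : M -> M -> M -> Prop) : Prop :=
  exists phi : formula, forall e : nat -> M, sat e phi <-> R (e 0%N) (e 1%N) (e 2%N).

Definition lin_indep2 (x y : M) : Prop :=
  forall a b : rat, a *: x + b *: y = 0 -> a = 0 /\ b = 0.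

Definition has_table (R : M -> M -> M -> Prop) (T : seq (rat * rat)) : Prop :=
  forall x y : M, lin_indep2 x y -> forall z : M,
    R x y z <-> exists2 pq, pq \in T & z = pq.1 *: x + pq.2 *: y.

Definition affine_rel (R : M -> M -> M -> Prop) : Prop :=
  definable3 R /\
  (exists T : seq (rat * rat),
      T != [::] /\ has_table R T /\
      (forall pq, pq \in T -> [/\ pq.1 != 0, pq.2 != 0 & pq.1 + pq.2 = 1])) /\
  (forall x y z : M, x <> y -> R x y z -> exists t : rat, z = x + t *: (y - x)) /\
  (forall x z : M, R x x z -> z = x).

Definition preserves (sigma : M -> M) (R : M -> M -> M -> Prop) : Prop :=
  forall a b c : M, R a b c <-> R (sigma a) (sigma b) (sigma c).

Definition in_AGL (sigma : M -> M) : Prop :=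
  exists (A : M -> M) (v : M),
    (forall (a : rat) (x y : M), A (a *: x + y) = a *: A x + A y) /\
    bijective A /\
    (forall x : M, sigma x = A x + v).

(* Main.v *)
Require Import Defs.
From mathcomp Require Import all_boot all_order all_algebra ring lra zify.
From Stdlib Require Import Classical.
Set Implicit Arguments. Unset Strict Implicit. Unset Printing Implicit Defensive.
Import Order.TTheory GRing.Theory Num.Theory.
Local Open Scope ring_scope.



Ltac fld := field; by do ?[apply/andP; split].
Ltac vring := rewrite -?mul_polyC ?polyCD ?polyCB ?polyCM ?polyCN ?polyC1 ?polyC0; ring.

Definition onl (x y z : M) := exists t : rat, z = x + t *: (y - x).
Definition li3 (x y z : M) := forall a b c : rat,
  a *: x + b *: y + c *: z = 0 -> [/\ a = 0, b = 0 & c = 0].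

Record env (R : M -> M -> M -> Prop) (tau taui : M -> M) (q : rat) : Prop := Env {
   e_q0 : q != 0; e_q1 : q != 1;
   e_tab : forall x y, lin_indep2 x y -> R x y (x + q *: (y - x));
   e_col : forall x y z, x <> y -> R x y z -> onl x y z;
   e_pres : preserves tau R; e_c1 : cancel tau taui; e_c2 : cancel taui tau }.

Lemma env_sym R tau taui q : env R tau taui q -> env R taui tau q.
Proof.
case=> q0 q1 Rt Rc P c1 c2; split=> //.
move=> a b c; rewrite (P (taui a)) !c2 //.
Qed.

Lemma li2_neq x y : lin_indep2 x y -> x <> y.
Proof.
move=> H E; subst y; have := H 1 (-1); rewrite scaleN1r scale1r subrr.
by case=> // /eqP; rewrite oner_eq0.
Qed.

Lemma li2_neq0 x y : lin_indep2 x y -> x <> 0.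
Proof.
move=> H E; subst x; have := H 1 0; rewrite scaler0 scale0r addr0.
by case=> // /eqP; rewrite oner_eq0.
Qed.

Lemma li2_sym x y : lin_indep2 x y -> lin_indep2 y x.
Proof. by move=> H a b E; have [] := H b a; [rewrite addrC | move=> -> ->]. Qed.

Lemma onl_comb X Y P Q c : onl X Y P -> onl X Y Q -> onl X Y (P + c *: (Q - P)).
Proof.
case=> a ->; case=> b ->; exists (a + c * (b - a)); vring.
Qed.

Lemma onl_l X Y : onl X Y X.
Proof. by exists 0; rewrite scale0r addr0. Qed.
Lemma onl_r X Y : onl X Y Y.
Proof. by exists 1; rewrite scale1r addrC subrK. Qed.

Lemma onl_inv P Q Z : onl P Q Z -> Z <> P -> exists c, Q = P + c *: (Z - P).
Proof.
case=> t ->; have [->|t0] := eqVneq t 0.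
  by rewrite scale0r addr0.
move=> _; exists t^-1; rewrite addrAC subrr add0r scalerA mulVf // scale1r.
by rewrite addrC subrK.
Qed.

Lemma p_indep x y s t : lin_indep2 x y -> s != t ->
  lin_indep2 (x + s *: (y - x)) (x + t *: (y - x)).
Proof.
move=> H st a b E.
have E2 : (a + b - a * s - b * t) *: x + (a * s + b * t) *: y = 0.
  by rewrite -E; vring.
have [h1 h2] := H _ _ E2.
have hb : b = - a by lra.
have : a * (s - t) = 0 by rewrite hb in h2; rewrite mulrBr; rewrite mulNr in h2; rewrite -h2; ring.
move/eqP; rewrite mulf_eq0 subr_eq0 (negbTE st) orbF => /eqP a0.
by split=> //; rewrite hb a0 oppr0.
Qed.

Lemma p_inj x y s t : lin_indep2 x y -> x + s *: (y - x) = x + t *: (y - x) -> s = t.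
Proof.
move=> H /addrI /eqP; rewrite -subr_eq0 -scalerBl scaler_eq0 subr_eq0 => /orP[/eqP //|].
by rewrite subr_eq0 => /eqP E; have := li2_neq H; rewrite E.
Qed.

Lemma tau_inj R tau taui q : env R tau taui q -> injective tau.
Proof. by case=> _ _ _ _ _ c1 _; apply: can_inj c1. Qed.

Lemma Rimg R tau taui q : env R tau taui q -> forall a b c,
  R a b c -> a <> b -> onl (tau a) (tau b) (tau c).
Proof.
move=> E a b c Rabc ab; have := e_col E; apply.
  by move/(tau_inj E).
by rewrite -(e_pres E).
Qed.

Lemma colZ R tau taui q (E : env R tau taui q) x y : lin_indep2 x y ->
  forall m : int, onl (tau x) (tau y) (tau (x + m%:~R *: (y - x))).
Proof.
move=> H.
pose p t := x + t *: (y - x).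
pose S t := onl (tau x) (tau y) (tau (p t)).
have q0 := e_q0 E; have q1 : 1 - q != 0 by rewrite subr_eq0 eq_sym (e_q1 E).
have Rp : forall s t, s != t -> R (p s) (p t) (p ((1 - q) * s + q * t)).
  move=> s t st; have := e_tab E (p_indep H st).
  by congr R; rewrite /p; vring.
have pinj : forall s t, tau (p s) = tau (p t) -> s = t.
  by move=> s t /(tau_inj E) /(p_inj H).
have opF : forall s t, S s -> S t -> S ((1 - q) * s + q * t).
  move=> s t Ss St; have [->|st] := eqVneq s t.
    by rewrite mulrBl mul1r subrK.
  rewrite /S; have [c ->] := Rimg E (Rp _ _ st) (fun e => negP st (introT eqP (p_inj H e))).
  exact: onl_comb.
have opG : forall s u, S s -> S u -> s != u -> S (s + (u - s) / q).
  move=> s u Ss Su su; set t := s + (u - s) / q.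
  have ht : (1 - q) * s + q * t = u by rewrite /t; field.
  have st : s != t.
    apply: contraNneq su => st; apply/eqP; rewrite -ht -st; ring.
  have := Rimg E (Rp _ _ st) (fun e => negP st (introT eqP (p_inj H e))).
  rewrite ht => L; rewrite /S; have [|c ->] := onl_inv L.
    by move/pinj => us; move: su; rewrite us eqxx.
  exact: onl_comb.
have opH : forall t u, S t -> S u -> t != u -> S ((u - q * t) / (1 - q)).
  move=> t u St Su tu; set s := (u - q * t) / (1 - q).
  have hs : (1 - q) * s + q * t = u by rewrite /s; field.
  have st : s != t.
    apply: contraNneq tu => st; apply/eqP; rewrite -hs st; ring.
  have := Rimg E (Rp _ _ st) (fun e => negP st (introT eqP (p_inj H e))).
  rewrite hs => [[c Lc]].
  have c1 : c != 1.
    apply: contraNneq tu => c1; apply/eqP/pinj; by rewrite Lc c1 scale1r addrC subrK.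
  rewrite /S; have -> : tau (p s) = tau (p t) + (1 - c)^-1 *: (tau (p u) - tau (p t)).
    rewrite Lc; have cc : 1 - c != 0 by rewrite subr_eq0 eq_sym.
    apply: (@scalerI _ _ (1 - c)) => //.
    rewrite scalerDr scalerA mulfV // scale1r; vring.
  exact: onl_comb.
have S0 : S 0 by rewrite /S /p scale0r addr0; apply: onl_l.
have S1 : S 1 by rewrite /S /p scale1r addrC subrK; apply: onl_r.
have Sq : forall z, S z -> S (q * z).
  by move=> z Sz; have := opF 0 z S0 Sz; rewrite mulr0 add0r.
have S1q : forall z, S z -> S ((1 - q) * z).
  by move=> z Sz; have := opF z 0 Sz S0; rewrite mulr0 addr0.
have Sdq : forall z, S z -> S (z / q).
  move=> z Sz; have [->|z0] := eqVneq z 0; first by rewrite mul0r.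
  have z0' : (0 : rat) != z by rewrite eq_sym.
  by have := opG 0 z S0 Sz z0'; rewrite subr0 add0r.
have Sd1q : forall z, S z -> S (z / (1 - q)).
  move=> z Sz; have [->|z0] := eqVneq z 0; first by rewrite mul0r.
  have z0' : (0 : rat) != z by rewrite eq_sym.
  by have := opH 0 z S0 Sz z0'; rewrite mulr0 subr0.
have Sadd : forall a b, S a -> S b -> S (a + b).
  move=> a b Sa Sb.
  have -> : a + b = (1 - q) * (a / (1 - q)) + q * (b / q) by fld.
  exact: opF _ _ (Sd1q _ Sa) (Sdq _ Sb).
have Sneg : forall a, S a -> S (- a).
  move=> a Sa; have [->|a0] := eqVneq a 0; first by rewrite oppr0.
  have -> : - a = (1 - q) * ((0 - q * a) / (1 - q)) / q by fld.
  exact: Sdq _ (S1q _ (opH a 0 Sa S0 a0)).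
have Snat : forall n : nat, S n%:R.
  elim=> [|n IH]; first exact: S0.
  by rewrite -addn1 natrD; apply: Sadd.
by case=> n; rewrite ?NegzE; [apply: Snat | rewrite ?rmorphN /=; apply: Sneg; apply: Snat].
Qed.

Lemma colF R tau taui q (E : env R tau taui q) x y : lin_indep2 x y ->
  forall t, onl (tau x) (tau y) (tau (x + t *: (y - x))).
Proof.
move=> H t; have [->|t0] := eqVneq t 0; first by rewrite scale0r addr0; apply: onl_l.
set c := x + t *: (y - x).
have Hc : lin_indep2 x c.
  have t0' : (0 : rat) != t by rewrite eq_sym.
  by have := p_indep H t0'; rewrite scale0r addr0.
have L1 := colZ E Hc (denq t).
have L2 := colZ E H (numq t).
have ed : x + (denq t)%:~R *: (c - x) = x + (numq t)%:~R *: (y - x).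
  rewrite /c [x + _ - x]addrAC subrr add0r scalerA; congr (_ + _ *: _).
  by rewrite -{2}(divq_num_den t) mulrC divfK // intr_eq0 denq_neq0.
rewrite ed in L1.
have nd : tau (x + (numq t)%:~R *: (y - x)) <> tau x.
  move/(tau_inj E) => e.
  have : x + (numq t)%:~R *: (y - x) = x + 0 *: (y - x) by rewrite scale0r addr0.
  move/(p_inj H)/eqP; rewrite intr_eq0 numq_eq0; exact/negP.
have [k ->] := onl_inv L1 nd.
by apply: onl_comb => //; apply: onl_l.
Qed.

Lemma li3_12 x y z : li3 x y z -> lin_indep2 x y.
Proof.
move=> H a b E; have E' : a *: x + b *: y + 0 *: z = 0 by rewrite scale0r addr0.
by case: (H _ _ _ E').
Qed.
Lemma li3_perm x y z : li3 x y z -> li3 y x z.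
Proof.
move=> H a b c E; have E' : b *: x + a *: y + c *: z = 0 by rewrite (addrC (b *: x)).
by case: (H _ _ _ E').
Qed.
Lemma li3_rot x y z : li3 x y z -> li3 z x y.
Proof.
move=> H a b c E; have E' : b *: x + c *: y + a *: z = 0 by rewrite -E; vring.
by case: (H _ _ _ E').
Qed.

Lemma li3_zd x y z : li3 x y z -> lin_indep2 z (x + y - z).
Proof.
move=> H a b E; have E' : b *: x + b *: y + (a - b) *: z = 0 by rewrite -E; vring.
have [h1 h2 h3] := H _ _ _ E'.
by split=> //; move: h3; rewrite h1 subr0.
Qed.

Lemma li3_disj x y z w : li3 x y z -> onl z x w -> onl y (x + y - z) w -> False.
Proof.
move=> H [s ->] [r] E.
have E' : (s - r) *: x + (-1) *: y + (1 - s + r) *: z = 0.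
  transitivity ((z + s *: (x - z)) - (y + r *: (x + y - z - y))); first vring.
  by rewrite E subrr.
have [_ h _] := H _ _ _ E'.
by move/eqP: h; rewrite oppr_eq0 oner_eq0.
Qed.

Lemma P1_aux R tau taui q (E : env R tau taui q) x y z P t u :
  li3 x y z -> lin_indep2 (tau z) (tau x) -> lin_indep2 (tau y) (tau (x + y - z)) ->
  P = tau x + t *: (tau y - tau x) -> P = tau z + u *: (tau (x + y - z) - tau z) ->
  u != 0 -> t = u.
Proof.
move=> H I1 I2 H1 H2 u0.
apply/eqP; apply/negPn/negP => tu.
have ut : u - t != 0 by rewrite subr_eq0 eq_sym.
set X := tau x in H1 H2 I1 I2 *; set Y := tau y in H1 H2 I1 I2 *;
set Z := tau z in H1 H2 I1 I2 *; set D := tau (x + y - z) in H1 H2 I1 I2 *.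
have hD : u *: D = X + t *: (Y - X) - Z + u *: Z.
  rewrite -H1 H2; vring.
pose W := Z + ((1 - t) / (u - t)) *: (X - Z).
have HW : W = Y + (u / (u - t)) *: (D - Y).
  apply: (@scalerI _ _ (u - t)) => //.
  rewrite /W !scalerDr !scalerA !(mulrC (u - t)) !divfK //.
  rewrite hD; vring.
have Ei := env_sym E.
have L1 := colF Ei I1 ((1 - t) / (u - t)).
have L2 := colF Ei I2 (u / (u - t)).
rewrite -/X -/Y -/Z -/D -/W in L1 L2; rewrite -HW in L2.
rewrite /X /Y /Z /D !(e_c1 E) in L1 L2.
exact: li3_disj H L1 L2.
Qed.

Lemma half_mid (x y : M) : 2 *: (x + 2^-1 *: (y - x)) = x + y.
Proof. by rewrite scalerDr scalerA mulfV // scale1r; vring. Qed.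

Lemma P1 R tau taui q (E : env R tau taui q) x y z :
  li3 x y z -> lin_indep2 (tau z) (tau x) -> lin_indep2 (tau z) (tau y) ->
  lin_indep2 (tau x) (tau (x + y - z)) -> lin_indep2 (tau y) (tau (x + y - z)) ->
  tau (x + y - z) = tau x + tau y - tau z.
Proof.
move=> H Izx Izy Ixd Iyd.
have Hxy := li3_12 H; have Hzd := li3_zd H.
have [t Ht] := colF E Hxy 2^-1.
have [u Hu] := colF E Hzd 2^-1.
have em : z + 2^-1 *: (x + y - z - z) = x + 2^-1 *: (y - x).
  apply: (@scalerI _ _ 2) => //; rewrite half_mid scalerDr scalerA mulfV // scale1r; vring.
rewrite em in Hu.
set m := x + 2^-1 *: (y - x) in Ht Hu.
have u0 : u != 0.
  apply/negP => /eqP u0; move: Hu; rewrite u0 scale0r addr0 => /(tau_inj E) mz.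
  have E' : 1 *: x + 1 *: y + (-2) *: z = 0.
    transitivity (2 *: m - 2 *: z); first by rewrite /m half_mid; vring.
    by rewrite mz subrr.
  by have [/eqP] := H _ _ _ E'; rewrite oner_eq0.
have tu := P1_aux E H Izx Iyd Ht Hu u0.
have Iyd' : lin_indep2 (tau x) (tau (y + x - z)) by rewrite (addrC y).
have Hu' : tau m = tau z + u *: (tau (y + x - z) - tau z) by rewrite (addrC y).
have Ht' : tau m = tau y + (1 - t) *: (tau x - tau y) by rewrite Ht; vring.
have tu' := P1_aux E (li3_perm H) Izy Iyd' Ht' Hu' u0.
have h1 : 1 - u - u = 0 by rewrite -{1}tu' tu; ring.
apply: (@scalerI _ _ u) => //.
have key : u *: tau (x + y - z) = tau x + u *: (tau y - tau x) - tau z + u *: tau z.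
  transitivity (tau z + u *: (tau (x + y - z) - tau z) - tau z + u *: tau z); first vring.
  by rewrite -Hu Ht tu.
rewrite key.
transitivity (u *: (tau x + tau y - tau z) + (1 - u - u) *: (tau x - tau z)); first vring.
by rewrite h1 scale0r addr0.
Qed.

Definition inspan (W X : M) := exists l : rat, X = l *: W.

Lemma span_onl W X Y Z : inspan W X -> inspan W Y -> onl X Y Z -> inspan W Z.
Proof. by case=> a ->; case=> b ->; case=> k ->; exists (a + k * (b - a)); vring. Qed.

Lemma li2_span W X Y : ~ inspan W X -> inspan W Y -> Y <> 0 -> lin_indep2 X Y.
Proof.
move=> nX [l ->] Y0 a b E.
have l0 : l != 0 by apply: contra_notN Y0 => /eqP ->; rewrite scale0r.
have [a0|a0] := eqVneq a 0.
  move: E; rewrite a0 scale0r add0r scalerA => /eqP; rewrite scaler_eq0 mulf_eq0.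
  rewrite (negbTE l0) orbF => /orP[/eqP->//|/eqP W0].
  by case: Y0; rewrite W0 scaler0.
case: nX; exists (- (b * l) / a).
apply: (@scalerI _ _ a) => //; rewrite scalerA mulrC divfK //.
by rewrite scaleNr -scalerA; apply/eqP; rewrite -addr_eq0 E.
Qed.

Lemma li2_span' W X Y : ~ inspan W X -> inspan W Y -> Y <> 0 -> lin_indep2 Y X.
Proof. by move=> h1 h2 h3; apply: li2_sym; apply: li2_span h1 h2 h3. Qed.

Lemma notin_span W : W <> 0 -> exists V, ~ inspan W V.
Proof.
move=> W0; exists 'X^(size W); case=> l E.
have := size_scale_leq l W; rewrite -E size_polyXn ltnn.
by [].
Qed.




Definition aff3 (a b c : M) (s t : rat) := a + s *: (b - a) + t *: (c - a).

Lemma li3_13 x y z : li3 x y z -> lin_indep2 x z.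
Proof.
move=> H a b E; have E' : a *: x + 0 *: y + b *: z = 0 by rewrite scale0r addr0.
by case: (H _ _ _ E').
Qed.

Lemma aff_indep a b c s1 t1 s2 t2 : li3 a b c -> (s1 != s2) || (t1 != t2) ->
  lin_indep2 (aff3 a b c s1 t1) (aff3 a b c s2 t2).
Proof.
move=> H st al be E.
have E' : (al * (1 - s1 - t1) + be * (1 - s2 - t2)) *: a + (al * s1 + be * s2) *: b
   + (al * t1 + be * t2) *: c = 0 by rewrite -E /aff3; vring.
have [h1 h2 h3] := H _ _ _ E'.
have hb : be = - al.
  have : al + be = (al * (1 - s1 - t1) + be * (1 - s2 - t2)) + (al * s1 + be * s2)
     + (al * t1 + be * t2) by ring.
  rewrite h1 h2 h3 !addr0 => /eqP; rewrite addr_eq0 => /eqP ->; by rewrite opprK.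
rewrite hb in h2 h3.
have e2 : al * (s1 - s2) = 0 by rewrite -h2; ring.
have e3 : al * (t1 - t2) = 0 by rewrite -h3; ring.
have al0 : al = 0.
  case/orP: st => st.
    by move/eqP: e2; rewrite mulf_eq0 subr_eq0 (negbTE st) orbF => /eqP.
  by move/eqP: e3; rewrite mulf_eq0 subr_eq0 (negbTE st) orbF => /eqP.
by rewrite hb al0 oppr0.
Qed.

Lemma collapse R tau taui q (E : env R tau taui q) a b c W : li3 a b c ->
  inspan W (tau a) -> inspan W (tau b) -> inspan W (tau c) ->
  forall s t, inspan W (tau (aff3 a b c s t)).
Proof.
move=> H Sa Sb Sc s t.
have [/andP[/eqP s0 /eqP t0]|st] := boolP ((s == 0) && (t == 0)).
  by rewrite /aff3 s0 t0 !scale0r !addr0.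
have Iu := colF E (li3_12 H) (2 * s).
have Iw := colF E (li3_13 H) (2 * t).
have Su := span_onl Sa Sb Iu; have Sw := span_onl Sa Sc Iw.
have Huw : lin_indep2 (aff3 a b c (2 * s) 0) (aff3 a b c 0 (2 * t)).
  apply: aff_indep => //; move: st; rewrite negb_and => /orP[h|h]; apply/orP.
    by left; rewrite mulf_eq0 negb_or h.
  by right; rewrite eq_sym mulf_eq0 negb_or h.
have := colF E Huw 2^-1.
have -> : aff3 a b c (2 * s) 0 + 2^-1 *: (aff3 a b c 0 (2 * t) - aff3 a b c (2 * s) 0)
    = aff3 a b c s t.
  apply: (@scalerI _ _ 2) => //; rewrite half_mid /aff3; vring.
apply: span_onl; first by move: Su; rewrite /aff3 scale0r addr0.
by move: Sw; rewrite /aff3 scale0r addr0.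
Qed.

Lemma li3_shift a b c v : li3 a b c -> (forall s t, v <> aff3 a b c s t) ->
  li3 (a - v) (b - v) (c - v).
Proof.
move=> H nv al be ga E.
have [S0|S0] := eqVneq (al + be + ga) 0.
  have E' : al *: a + be *: b + ga *: c = 0.
    transitivity (al *: (a - v) + be *: (b - v) + ga *: (c - v) + (al + be + ga) *: v).
      vring.
    by rewrite E S0 scale0r addr0.
  exact: H _ _ _ E'.
exfalso; apply: (nv (be / (al + be + ga)) (ga / (al + be + ga))).
apply: (@scalerI _ _ (al + be + ga)) => //.
rewrite /aff3 !scalerDr !scalerA !(mulrC (al + be + ga)) !divfK //.
transitivity ((al + be + ga) *: v + (al *: (a - v) + be *: (b - v) + ga *: (c - v))).
  by rewrite E addr0.
vring.
Qed.

Lemma neq_of_li3 a b c : li3 a b c -> [/\ a <> b, a <> c & b <> c].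
Proof.
move=> H; split; first exact: li2_neq (li3_12 H).
  exact: li2_neq (li3_13 H).
exact: li2_neq (li3_12 (li3_rot (li3_rot H))).
Qed.

Lemma KeyCore R tau taui q (E : env R tau taui q) a b c W : li3 a b c -> W <> 0 ->
  inspan W (tau a) -> inspan W (tau b) -> inspan W (tau c) ->
  tau a <> 0 -> tau b <> 0 -> tau c <> 0 -> False.
Proof.
move=> H W0 Sa Sb Sc A0 B0 C0.
have Ei := env_sym E.
have [V nV] := notin_span W0.
have vnot : forall s t, taui V <> aff3 a b c s t.
  move=> s t e; apply: nV; rewrite -(e_c2 E V) e; exact: (collapse E H Sa Sb Sc).
have Hs := li3_shift H vnot.
have [ab ac bc] := neq_of_li3 H.
have Sa' := Sa; have Sb' := Sb; have Sc' := Sc.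
case: Sa' => al ea; case: Sb' => be eb; case: Sc' => ga ec.
have alb : al != be.
  by apply/eqP => e; apply: ab; apply: (tau_inj E); rewrite ea eb e.
have gal : ga != al.
  by apply/eqP => e; apply: ac; apply: (tau_inj E); rewrite ea ec e.
pose den r := (al - be) + r * (ga - al).
pose r : rat := if den 2 == 0 then 3 else 2.
have dr : den r != 0.
  rewrite /r; case: ifP => [/eqP d2|/negbT //].
  apply/eqP => d3; have : ga - al = den 3 - den 2 by rewrite /den; ring.
  by rewrite d2 d3 subrr => /eqP; rewrite subr_eq0 (negbTE gal).
have r0 : r != 0 by rewrite /r; case: ifP.
have r1 : 1 - r != 0.
  by rewrite /r; case: ifP.
set la := (al - be) / den r.
have la0 : la != 0.
  by rewrite /la mulf_eq0 negb_or invr_eq0 dr subr_eq0 alb.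
have lad : la * den r = al - be by rewrite /la divfK.
set mu := 1 - la * (1 - r).
set P := V + r *: (tau c - V).
set V' := tau b + la *: (P - tau b).
have hV' : V' = V + mu *: (tau a - V).
  transitivity (V + mu *: (tau a - V) + (be - al + la * den r) *: W).
    rewrite /V' /P /mu ea eb ec /den /=; clearbody la r; vring.
  have -> : be - al + la * den r = 0 by rewrite lad; ring.
  by rewrite scale0r addr0.
have m1 : 1 - mu = la * (1 - r) by rewrite /mu; ring.
have eP : tau b + la^-1 *: (V' - tau b) = P.
  by rewrite /V' [X in la^-1 *: X]addrC addKr scalerA mulVf // scale1r addrC subrK.
have hP : P = V + r *: (tau c - V) by [].
clearbody V' mu la P r.
have nV' : ~ inspan W V'.
  case=> k ek; apply: nV; exists ((k - mu * al) / (la * (1 - r))).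
  have lr : la * (1 - r) != 0 by rewrite mulf_neq0.
  apply: (@scalerI _ _ (la * (1 - r))) => //.
  rewrite scalerA (mulrC (la * _)) divfK // -m1.
  transitivity (V' - mu *: tau a); first by rewrite hV'; vring.
  by rewrite ek ea; vring.
have L1 := colF Ei (li2_span nV Sa A0) mu.
rewrite (e_c1 E) -hV' in L1.
have L2 := colF Ei (li2_span nV Sc C0) r.
rewrite (e_c1 E) -hP in L2.
have L3 := colF Ei (li2_span' nV' Sb B0) la^-1.
rewrite (e_c1 E) eP in L3.
case: L1 => m' e1; case: L2 => r' e2; case: L3 => l' e3.
have E' : (l' * m') *: (a - taui V) + (1 - l') *: (b - taui V) + (- r') *: (c - taui V) = 0.
  transitivity ((b + l' *: (taui V' - b)) - (taui V + r' *: (c - taui V))).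
    by rewrite e1; vring.
  by rewrite -e3 -e2 subrr.
have [_ _ /eqP] := Hs _ _ _ E'; rewrite oppr_eq0 => /eqP r'0.
move: e2; rewrite r'0 scale0r addr0 => /(can_inj (e_c2 E)).
rewrite hP => /eqP; rewrite addrC -subr_eq0 addrK scaler_eq0 (negbTE r0) /= subr_eq0 => /eqP eC.
by apply: nV; rewrite -eC.
Qed.

Lemma li3_g1 a b c : li3 a b c -> li3 b c (aff3 a b c 1 1).
Proof.
move=> H x y z E; have E' : (- z) *: a + (x + z) *: b + (y + z) *: c = 0.
  by rewrite -E /aff3; vring.
by have [h1 h2 h3] := H _ _ _ E'; split; lra.
Qed.
Lemma li3_g2 a b c : li3 a b c -> li3 a c (aff3 a b c 1 1).
Proof.
move=> H x y z E; have E' : (x - z) *: a + z *: b + (y + z) *: c = 0.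
  by rewrite -E /aff3; vring.
by have [h1 h2 h3] := H _ _ _ E'; split; lra.
Qed.
Lemma li3_g3 a b c : li3 a b c -> li3 a b (aff3 a b c 1 1).
Proof.
move=> H x y z E; have E' : (x - z) *: a + (y + z) *: b + z *: c = 0.
  by rewrite -E /aff3; vring.
by have [h1 h2 h3] := H _ _ _ E'; split; lra.
Qed.

Lemma KeySpan R tau taui q (E : env R tau taui q) a b c W : li3 a b c -> W <> 0 ->
  inspan W (tau a) -> inspan W (tau b) -> inspan W (tau c) -> False.
Proof.
move=> H W0 Sa Sb Sc.
have Sg := collapse E H Sa Sb Sc 1 1.
set g := aff3 a b c 1 1 in Sg.
have [ab ac bc] := neq_of_li3 H.
have [_ bg cg] := neq_of_li3 (li3_g1 H).
have [_ ag _] := neq_of_li3 (li3_g2 H).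
have ti := tau_inj E.
have nz : forall u v, tau u = 0 -> v <> u -> tau v <> 0.
  by move=> u v tu uv tv; apply: uv; apply: ti; rewrite tu tv.
have [A0|A0] := eqVneq (tau a) 0.
  apply: (KeyCore E (li3_g1 H) W0 Sb Sc Sg); apply: (nz _ _ A0) => // e.
  - exact: (ab (esym e)).
  - exact: (ac (esym e)).
  - exact: (ag (esym e)).
have [B0|B0] := eqVneq (tau b) 0.
  apply: (KeyCore E (li3_g2 H) W0 Sa Sc Sg); first exact/eqP.
    by apply: (nz _ _ B0) => e; exact: (bc (esym e)).
  by apply: (nz _ _ B0) => e; exact: (bg (esym e)).
have [C0|C0] := eqVneq (tau c) 0.
  apply: (KeyCore E (li3_g3 H) W0 Sa Sb Sg); try exact/eqP.
  by apply: (nz _ _ C0) => e; exact: (cg (esym e)).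
by apply: (KeyCore E H W0 Sa Sb Sc); apply/eqP.
Qed.



Definition amo (B : nat -> Prop) := forall i j, i <> j -> B i -> B j -> False.

Lemma pick_good (Bs : seq (nat -> Prop)) (S : seq nat) :
  uniq S -> (forall B, List.In B Bs -> amo B) -> (size Bs < size S)%N ->
  exists i, i \in S /\ forall B, List.In B Bs -> ~ B i.
Proof.
elim: Bs S => [|B Bs IH] S uS Ham Hs.
  by case: S uS Hs => // s S _ _; exists s; split => //; rewrite inE eqxx.
have amoB : amo B by apply: Ham; left.
have Ham' : forall B', List.In B' Bs -> amo B' by move=> B' h; apply: Ham; right.
case: (classic (exists s0, s0 \in S /\ B s0)) => [[s0 [s0S Bs0]]|nB].
  have uS' : uniq (rem s0 S) by apply: rem_uniq.
  have Hs' : (size Bs < size (rem s0 S))%N.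
    by rewrite size_rem //; move: Hs => /=; case: (size S) => // n.
  have [i [iS gi]] := IH _ uS' Ham' Hs'.
  exists i; split; first exact: (mem_rem iS).
  move=> B' [<-|h]; last exact: gi.
  move=> Bi; apply: (amoB s0 i) => // e; subst i.
  by move: iS; rewrite mem_rem_uniq // inE eqxx.
have Hs' : (size Bs < size S)%N by move: Hs => /=; apply: ltnW.
have [i [iS gi]] := IH _ uS Ham' Hs'.
exists i; split => // B' [<-|h]; last exact: gi.
by move=> Bi; apply: nB; exists i.
Qed.

Lemma notli2_span X Y : X <> 0 -> ~ lin_indep2 X Y -> inspan X Y.
Proof.
move=> X0 nI; apply: NNPP => nS; apply: nI => a b E.
have [b0|b0] := eqVneq b 0.
  move: E; rewrite b0 scale0r addr0 => /eqP; rewrite scaler_eq0 => /orP[/eqP a0|/eqP //].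
  by [].
exfalso; apply: nS; exists (- a / b).
apply: (@scalerI _ _ b) => //; rewrite scalerA mulrC divfK // scaleNr.
by apply/eqP; rewrite -addr_eq0 addrC E.
Qed.

Lemma one_bad R tau taui q (E : env R tau taui q) f (h : nat -> M) :
  tau f <> 0 -> (forall i j, i <> j -> li3 f (h i) (h j)) ->
  amo (fun i => ~ lin_indep2 (tau f) (tau (h i))).
Proof.
move=> f0 Hh i j ij bi bj.
apply: (KeySpan E (Hh _ _ ij) f0); first by exists 1; rewrite scale1r.
  exact: notli2_span.
exact: notli2_span.
Qed.

Lemma lowN (v : M) N i : (size v <= N)%N -> v`_(N + i) = 0.
Proof. by move=> h; apply: nth_default; apply: leq_trans h (leq_addr _ _). Qed.

Lemma coefE_hi (u : M) k n : (size u <= n)%N -> (u + k *: 'X^n)`_n = k.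
Proof.
by move=> h; rewrite coefD coefZ coefXn eqxx mulr1 nth_default // add0r.
Qed.

Lemma li3_gen (f s1 s2 : M) (k1 k2 : rat) N i j : f != 0 -> (size f <= N)%N ->
  (size s1 <= N)%N -> (size s2 <= N)%N -> k1 != 0 -> k2 != 0 -> i != j ->
  li3 f (s1 + k1 *: 'X^(N + i)) (s2 + k2 *: 'X^(N + j)).
Proof.
move=> f0 hf h1 h2 k10 k20 ij al be ga E.
have ci := congr1 (fun p : M => p`_(N + i)) E.
have cj := congr1 (fun p : M => p`_(N + j)) E.
move: ci cj; rewrite !coefE !lowN // !eqxx !eqn_add2l (negbTE ij) eq_sym (negbTE ij).
rewrite !mulr0 !addr0 !add0r !mulr1 => ci cj.
have be0 : be = 0 by move/eqP: ci; rewrite mulf_eq0 (negbTE k10) orbF => /eqP.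
have ga0 : ga = 0 by move/eqP: cj; rewrite mulf_eq0 (negbTE k20) orbF => /eqP.
move: E; rewrite be0 ga0 !scale0r !addr0 => /eqP; rewrite scaler_eq0 (negbTE f0) orbF.
by move/eqP.
Qed.

Lemma li2_G1 (s u : M) (k : rat) n : (size s <= n)%N -> (size u <= n)%N -> k != 0 -> u != 0 ->
  lin_indep2 (s + k *: 'X^n) u.
Proof.
move=> hs hu k0 u0 al be E.
have cn := congr1 (fun p : M => p`_n) E.
move: cn; rewrite !coefE eqxx !(nth_default 0 hs) !(nth_default 0 hu).
rewrite !mulr0 !add0r mulr1 addr0 => cn.
have al0 : al = 0 by move/eqP: cn; rewrite mulf_eq0 (negbTE k0) orbF => /eqP.
move: E; rewrite al0 scale0r add0r => /eqP; rewrite scaler_eq0 (negbTE u0) orbF.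
by move/eqP.
Qed.

Lemma li2_G2 (s : M) n : (size s <= n)%N -> s != 0 -> lin_indep2 (s + 'X^n) 'X^n.
Proof.
move=> hs s0 al be E.
have cn := congr1 (fun p : M => p`_n) E.
move: cn; rewrite !coefE eqxx !(nth_default 0 hs).
rewrite !mulr1 => cn.
have eb : be = - al by apply/eqP; rewrite -addr_eq0 addrC cn.
move: E; rewrite eb scaleNr scalerDr addrK => /eqP; rewrite scaler_eq0 (negbTE s0) orbF.
by move/eqP => ->; rewrite oppr0.
Qed.

Lemma li3_F3 (a b : M) n : lin_indep2 a b -> (size a <= n)%N -> (size b <= n)%N ->
  li3 a b 'X^n.
Proof.
move=> H ha hb al be ga E.
have cn := congr1 (fun p : M => p`_n) E.
move: cn; rewrite !coefE eqxx !(nth_default 0 ha) !(nth_default 0 hb) !mulr0 !add0r mulr1 => g0.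
move: E; rewrite g0 scale0r addr0 => /H [-> ->]; by split.
Qed.

Lemma li3_F4 (s c : M) n : lin_indep2 s c -> (size s <= n)%N -> (size c <= n)%N ->
  li3 (s - 'X^n) 'X^n c.
Proof.
move=> H hs hc al be ga E.
have cn := congr1 (fun p : M => p`_n) E.
move: cn; rewrite !coefE eqxx !(nth_default 0 hs) !(nth_default 0 hc) !mulr0 !addr0 !mulr1.
rewrite sub0r mulrN1 => cn.
have eb : be = al by apply/eqP; rewrite -subr_eq0 -cn; apply/eqP; ring.
have E' : al *: s + ga *: c = 0 by rewrite -E eb; vring.
by have [a0 g0] := H _ _ E'; split => //; rewrite eb.
Qed.

Lemma size_addN (p q : M) N : (size p <= N)%N -> (size q <= N)%N -> (size (p + q)%R <= N)%N.
Proof. by move=> hp hq; apply: leq_trans (size_polyD p q) _; rewrite ssrnat.geq_max hp hq. Qed.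
Lemma size_oppN (p : M) N : (size p <= N)%N -> (size (- p)%R <= N)%N.
Proof. by rewrite size_polyN. Qed.

Lemma Level1 R tau taui q (E : env R tau taui q) a b c :
  lin_indep2 a b -> lin_indep2 (a + b) c -> c != 0 -> a + b - c != 0 ->
  tau a <> 0 -> tau b <> 0 -> tau c <> 0 -> tau (a + b - c) <> 0 ->
  tau (a + b - c) = tau a + tau b - tau c.
Proof.
move=> Hab Habc c0 d0 A0 B0 C0 D0.
have a0 : a != 0 by apply/eqP; apply: li2_neq0 Hab.
have b0 : b != 0 by apply/eqP; apply: li2_neq0 (li2_sym Hab).
set N := (size a + size b + size c)%N.
have ha : (size a <= N)%N by rewrite /N; lia.
have hb : (size b <= N)%N by rewrite /N; lia.
have hc : (size c <= N)%N by rewrite /N; lia.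
have hab : (size (a + b)%R <= N)%N by apply: size_addN.
have hd : (size (a + b - c)%R <= N)%N by apply: size_addN => //; apply: size_oppN.
pose e (i : nat) : M := 'X^(N + i).
pose g (i : nat) : M := a + b - 'X^(N + i).
have ee : forall i, e i = 0 + 1 *: 'X^(N + i) by move=> i; rewrite add0r scale1r.
have eg : forall i, g i = (a + b) + (-1) *: 'X^(N + i) by move=> i; rewrite scaleN1r.
have n1 : (-1 : rat) != 0 by rewrite oppr_eq0 oner_eq0.
have s0 : (size (0%R : M) <= N)%N by rewrite size_poly0.
have Fe : forall f : M, f != 0 -> (size f <= N)%N -> forall i j, i <> j -> li3 f (e i) (e j).
  move=> f f0 hf i j ij; rewrite !ee; apply: li3_gen => //; exact/eqP.
have Fg : forall f : M, f != 0 -> (size f <= N)%N -> forall i j, i <> j -> li3 f (g i) (g j).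
  move=> f f0 hf i j ij; rewrite !eg; apply: li3_gen => //; exact/eqP.
pose Bs : seq (nat -> Prop) :=
  [:: (fun i => ~ lin_indep2 (tau a) (tau (e i)));
      (fun i => ~ lin_indep2 (tau b) (tau (e i)));
      (fun i => ~ lin_indep2 (tau a) (tau (g i)));
      (fun i => ~ lin_indep2 (tau b) (tau (g i)));
      (fun i => ~ lin_indep2 (tau c) (tau (g i)));
      (fun i => ~ lin_indep2 (tau c) (tau (e i)));
      (fun i => ~ lin_indep2 (tau (a + b - c)) (tau (g i)));
      (fun i => ~ lin_indep2 (tau (a + b - c)) (tau (e i)))].
have HB : forall B, List.In B Bs -> amo B.
  move=> B; rewrite /Bs /=.
  by case=> [<-|[<-|[<-|[<-|[<-|[<-|[<-|[<-|[]]]]]]]]];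
    apply: (one_bad E) => //; (apply: Fe || apply: Fg).
have [i [_ gi]] := @pick_good Bs (iota 0 9) (iota_uniq 0 9) HB (erefl _).
have G : forall P : Prop, ~ ~ P -> P by move=> P; apply: NNPP.
have g1 := G _ (gi _ (or_introl erefl)).
have g2 := G _ (gi _ (or_intror (or_introl erefl))).
have g3 := G _ (gi _ (or_intror (or_intror (or_introl erefl)))).
have g4 := G _ (gi _ (or_intror (or_intror (or_intror (or_introl erefl))))).
have g5 := G _ (gi _ (or_intror (or_intror (or_intror (or_intror (or_introl erefl)))))).
have g6 := G _ (gi _ (or_intror (or_intror (or_intror (or_intror (or_intror (or_introl erefl))))))).
have g7 := G _ (gi _ (or_intror (or_intror (or_intror (or_intror (or_intror (or_intror (or_introl erefl)))))))).
have g8 := G _ (gi _ (or_intror (or_intror (or_intror (or_intror (or_intror (or_intror (or_intror (or_introl erefl))))))))).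
simpl in g1, g2, g3, g4, g5, g6, g7, g8.
have H1 : li3 a b (e i) by apply: li3_F3 => //; lia.
have P1a := P1 E H1 (li2_sym g1) (li2_sym g2) g3 g4.
have H2 : li3 (g i) (e i) c by apply: li3_F4 => //; lia.
have eq : g i + e i - c = a + b - c by rewrite /g /e; vring.
have P1b := P1 E H2 g5 g6.
rewrite eq in P1b.
rewrite P1b; [|exact: li2_sym g7|exact: li2_sym g8].
rewrite P1a; vring.
Qed.

Lemma hi_neq0 (s : M) (k : rat) n : (size s <= n)%N -> k != 0 -> s + k *: 'X^n != 0.
Proof. by move=> hs k0; apply: contraNneq k0 => e; rewrite -(coefE_hi k hs) e coef0. Qed.

Lemma Xn_inj (m n : nat) : ('X^m : M) = 'X^n -> m = n.
Proof. by move=> e; have := congr1 (fun p : M => size p) e; rewrite !size_polyXn => -[]. Qed.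

Lemma Level2 R tau taui q (E : env R tau taui q) a b c :
  a != 0 -> b != 0 -> c != 0 -> a + b - c != 0 ->
  tau a <> 0 -> tau b <> 0 -> tau c <> 0 -> tau (a + b - c) <> 0 ->
  tau (a + b - c) = tau a + tau b - tau c.
Proof.
move=> a0 b0 c0 d0 A0 B0 C0 D0.
set N := (size a + size b + size c)%N.
have ti := tau_inj E.
pose h (i : nat) : M := 'X^(N + i).
pose Bs : seq (nat -> Prop) :=
  [:: (fun i => tau (h i) = 0); (fun i => tau (a + h i - c) = 0)].
have HB : forall B, List.In B Bs -> amo B.
  move=> B; rewrite /Bs /=; case=> [<-|[<-|[]]] i j ij bi bj; apply: ij.
    by have := ti _ _ (etrans bi (esym bj)) => /Xn_inj /eqP; rewrite eqn_add2l => /eqP.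
  have := ti _ _ (etrans bi (esym bj)) => /eqP; rewrite (inj_eq (subIr c)) (inj_eq (addrI a)).
  by move/eqP/Xn_inj/eqP; rewrite eqn_add2l => /eqP.
have [i [_ gi]] := @pick_good Bs (iota 0 3) (iota_uniq 0 3) HB (erefl _).
have H0 : tau (h i) <> 0 := gi _ (or_introl erefl).
have H1 : tau (a + h i - c) <> 0 := gi _ (or_intror (or_introl erefl)).
have ha : (size a <= N + i)%N by rewrite /N; lia.
have hb : (size b <= N + i)%N by rewrite /N; lia.
have hc : (size c <= N + i)%N by rewrite /N; lia.
have hac : (size (a - c)%R <= N + i)%N by apply: size_addN => //; apply: size_oppN.
have hd : (size (a + b - c)%R <= N + i)%N.
  by apply: size_addN; [apply: size_addN|apply: size_oppN].
have e1 : a + h i = a + 1 *: 'X^(N + i) by rewrite scale1r.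
have e2 : a + h i - c = (a - c) + 1 *: 'X^(N + i) by rewrite scale1r /h; ring.
have e3 : a + h i - c + b = (a + b - c) + 'X^(N + i) by rewrite /h; ring.
have e4 : a + h i - c + b - h i = a + b - c by rewrite /h; ring.
have n1 : (1 : rat) != 0 by rewrite oner_eq0.
have hi0 : h i != 0 by rewrite /h -[X in X != 0]add0r -[X in 0 + X]scale1r hi_neq0 // size_poly0.
have PLa : tau (a + h i - c) = tau a + tau (h i) - tau c.
  apply: (Level1 E) => //.
  - apply: li2_sym; rewrite /h -[X in lin_indep2 X _]add0r -[X in lin_indep2 (0 + X) _]scale1r.
    by apply: li2_G1 => //; rewrite size_poly0.
  - by rewrite e1; apply: li2_G1.
  - by rewrite e2; apply: hi_neq0.
have PLb : tau (a + h i - c + b - h i) = tau (a + h i - c) + tau b - tau (h i).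
  apply: (Level1 E) => //.
  - by rewrite e2; apply: li2_G1.
  - by rewrite e3; apply: li2_G2.
  - by rewrite e4.
  - by rewrite e4.
by move: PLb; rewrite e4 PLa => ->; vring.
Qed.



Lemma good_hi R tau taui q (E : env R tau taui q) (v : M) :
  (size (taui 0%R) < size v)%N -> v != 0 /\ tau v <> 0.
Proof.
move=> h; split.
  by apply: contraTneq h => ->; rewrite size_poly0.
move=> e; have : v = taui 0 by rewrite -e (e_c1 E).
by move=> ev; move: h; rewrite ev ltnn.
Qed.

Lemma size_hiD (p v : M) : (size v < size p)%N -> size (p + v) = size p.
Proof. by move=> h; rewrite size_polyDl. Qed.

Definition gsel (taui : M -> M) (x : M) : M := 'X^(size x + size (taui 0%R)).
Definition Amap (tau taui : M -> M) (x : M) := tau (gsel taui x + x) - tau (gsel taui x).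

Lemma size_gsel taui x : size (gsel taui x) = (size x + size (taui 0%R)).+1.
Proof. by rewrite /gsel size_polyXn. Qed.

Lemma Adef R tau taui q (E : env R tau taui q) x y :
  y != 0 -> tau y <> 0 -> y + x != 0 -> tau (y + x) <> 0 ->
  tau (y + x) - tau y = Amap tau taui x.
Proof.
move=> y0 Y0 yx0 YX0.
have sg := size_gsel taui x.
have [g0 G0] : gsel taui x != 0 /\ tau (gsel taui x) <> 0.
  by apply: (good_hi E); rewrite sg; lia.
have [gx0 GX0] : gsel taui x + x != 0 /\ tau (gsel taui x + x) <> 0.
  by apply: (good_hi E); rewrite size_hiD sg; lia.
have ed : y + x + gsel taui x - y = gsel taui x + x by ring.
have d0 : y + x + gsel taui x - y != 0 by rewrite ed.
have D0 : tau (y + x + gsel taui x - y) <> 0 by rewrite ed.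
rewrite /Amap; have := Level2 E yx0 g0 y0 d0 YX0 G0 Y0 D0; rewrite ed => ->.
ring.
Qed.

Lemma Aadd R tau taui q (E : env R tau taui q) x1 x2 :
  Amap tau taui (x1 + x2) = Amap tau taui x1 + Amap tau taui x2.
Proof.
set y : M := 'X^(size x1 + size x2 + size (taui 0%R)).
have sy : size y = (size x1 + size x2 + size (taui 0%R)).+1 by rewrite size_polyXn.
have h1 : (size (taui 0%R) < size y)%N by rewrite sy; lia.
have h2 : (size (taui 0%R) < size (y + x2)%R)%N by rewrite size_hiD sy; lia.
have h3 : (size (taui 0%R) < size (y + x2 + x1)%R)%N.
  by rewrite !size_hiD ?sy; try lia; rewrite size_hiD sy; lia.
have [y0 Y0] := good_hi E h1.
have [y20 Y20] := good_hi E h2.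
have [y210 Y210] := good_hi E h3.
have e1 := Adef E y0 Y0 y20 Y20.
have e2 := Adef E y20 Y20 y210 Y210.
have e : y + (x1 + x2) = y + x2 + x1 by ring.
have [y120 Y120] : y + (x1 + x2) != 0 /\ tau (y + (x1 + x2)) <> 0 by rewrite e.
have e3 := Adef E y0 Y0 y120 Y120.
rewrite -e1 -e2 -e3 e; ring.
Qed.

Lemma add_lin (f : M -> M) : (forall x y, f (x + y) = f x + f y) ->
  forall (a : rat) x y, f (a *: x + y) = a *: f x + f y.
Proof.
move=> fD.
have f0 : f 0 = 0 by apply: (@addrI _ (f 0)); rewrite -fD !addr0.
have fN : forall x, f (- x) = - f x.
  by move=> x; apply: (@addrI _ (f x)); rewrite -fD !subrr.
have fMn : forall x n, f (x *+ n) = f x *+ n.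
  by move=> x; elim=> [|n IH]; rewrite ?mulr0n // !mulrS fD IH.
have fZ : forall (z : int) x, f (z%:~R *: x) = z%:~R *: f x.
  move=> z x; rewrite !scaler_int.
  by case: z => n; rewrite /intmul ?fN fMn.
move=> a x y; rewrite fD; congr (_ + _).
have d0 : ((denq a)%:~R : rat) != 0 by rewrite intr_eq0 denq_neq0.
apply: (@scalerI _ _ (denq a)%:~R) => //.
by rewrite -fZ !scalerA (mulrC _ a) -numqE fZ.
Qed.

Lemma Ainj R tau taui q (E : env R tau taui q) x : Amap tau taui x = 0 -> x = 0.
Proof.
rewrite /Amap => /eqP; rewrite subr_eq0 => /eqP /(tau_inj E) /eqP.
by rewrite -subr_eq0 addrAC subrr add0r => /eqP.
Qed.

Lemma repr_all R tau taui q (E : env R tau taui q) :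
  forall x, tau x = Amap tau taui x + (tau 'X^(size (taui 0%R)) - Amap tau taui 'X^(size (taui 0%R))).
Proof.
set A := Amap tau taui.
have AD : forall x y, A (x + y) = A x + A y := Aadd E.
have AL : forall a x y, A (a *: x + y) = a *: A x + A y := add_lin AD.
have A0 : A 0 = 0 by apply: (@addrI _ (A 0)); rewrite -AD !addr0.
have AB : forall x y, A (x - y) = A x - A y.
  by move=> x y; have := AL (-1) y x; rewrite !scaleN1r => h; rewrite [x - y]addrC h addrC.
have Ai : forall x y, A x = A y -> x = y.
  by move=> x y e; apply/eqP; rewrite -subr_eq0; apply/eqP; apply: (Ainj E); rewrite -/A AB e subrr.
set o := taui 0%R.
set y1 : M := 'X^(size o).
set v := tau y1 - A y1.
have hy1 : (size o < size y1)%N by rewrite size_polyXn.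
have [y10 Y10] := good_hi E hy1.
have Good : forall z, z != 0 -> tau z <> 0 -> tau z = A z + v.
  move=> z z0 Z0.
  have e : y1 + (z - y1) = z by rewrite addrC subrK.
  have := Adef E (x := z - y1) y10 Y10; rewrite e => /(_ z0 Z0) h.
  move: h; rewrite -/A AB => h.
  by rewrite -(subrK (tau y1) (tau z)) h /v; ring.
have To : tau o = 0 by rewrite /o (e_c2 E).
have Oc : o != 0 -> tau o = A o + v.
  move=> o0.
  have claim : forall k, (size o <= k)%N -> exists c, A (o + c *: 'X^k) + v = 0.
    move=> k hk.
    have sXk : size ('X^k : M) = k.+1 by rewrite size_polyXn.
    have s2Xk : size (2 *: 'X^k : M) = k.+1 by rewrite size_scale // size_polyXn.
    have hu : (size o < size ('X^k + o)%R)%N by rewrite size_hiD sXk //; lia.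
    have hw : (size o < size (2 *: 'X^k + o)%R)%N by rewrite size_hiD s2Xk //; lia.
    have [u0 U0] := good_hi E hu; have [w0 W0] := good_hi E hw.
    have Huw : lin_indep2 ('X^k + o) (2 *: 'X^k + o).
      move=> al be e.
      have ck := congr1 (fun p : M => p`_k) e.
      move: ck; rewrite !coefE eqxx !(nth_default 0 hk) !addr0 !mulr1 => ck.
      have e' : (al + be) *: o = 0.
        transitivity (al *: ('X^k + o) + be *: (2 *: 'X^k + o) - (al + be * 2) *: 'X^k).
          vring.
        by rewrite e ck scale0r subr0.
      move/eqP: e'; rewrite scaler_eq0 (negbTE o0) orbF => /eqP ab.
      have be0 : be = 0 by lra.
      by split => //; lra.
    have := colF E Huw (-1).
    have -> : 'X^k + o + (-1) *: (2 *: 'X^k + o - ('X^k + o)) = o by vring.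
    rewrite To => -[c hc].
    exists (1 + c).
    have -> : o + (1 + c) *: 'X^k = c *: ((2 *: 'X^k + o) - ('X^k + o)) + ('X^k + o) by vring.
    rewrite (AL c) AB.
    move: hc; rewrite Good // Good // => hc.
    by rewrite hc; ring.
  have [c1 h1] := claim (size o) (leqnn _).
  have [c2 h2] := claim (size o).+1 (leqnSn _).
  have : A (o + c1 *: 'X^(size o)) = A (o + c2 *: 'X^((size o).+1)).
    by apply: (@addIr _ v); rewrite h1 h2.
  move/Ai => e.
  have ck := congr1 (fun p : M => p`_(size o)) e.
  move: ck; rewrite !coefE eqxx !(nth_default 0 (leqnn _)) eqn_leq ltnn andbF.
  rewrite !mulr0 !mulr1 !add0r => c10.
  by move: h1; rewrite c10 scale0r addr0 To => ->.
move=> x.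
have [x0|x0] := eqVneq x 0.
  set w := taui v.
  have [w0|w0] := eqVneq w 0.
    by rewrite x0 A0 add0r -{1}w0 /w (e_c2 E).
  exfalso; have tw : tau w = v by rewrite /w (e_c2 E).
  have : tau w = A w + v.
    have [W0|W0] := eqVneq (tau w) 0.
      have wo : w = o by rewrite /o -W0 (e_c1 E).
      by rewrite wo; apply: Oc; rewrite -wo.
    by apply: Good => //; apply/eqP.
  rewrite tw => h; have : A w = 0 by apply: (@addIr _ v); rewrite -h add0r.
  move/(Ainj E) => w00.
  by move: w0; rewrite w00 eqxx.
have [X0|X0] := eqVneq (tau x) 0.
  have xo : x = o by rewrite /o -X0 (e_c1 E).
  by rewrite xo; apply: Oc; rewrite -xo.
by apply: Good => //; apply/eqP.
Qed.

Theorem lemma1 (R : M -> M -> M -> Prop) (sigma : M -> M) :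
  affine_rel R -> bijective sigma -> preserves sigma R -> in_AGL sigma.
Proof.
case=> _ [[T [T0 [HT Hp]]] [Hcol _]] [sinv c1 c2] Hpres.
case: T T0 HT Hp => // [[p q] T'] _ HT Hp.
have [p0 q0 pq1] := Hp (p, q) (mem_head _ _).
simpl in p0, q0, pq1.
have E : env R sigma sinv q.
  split=> //.
  - by apply: contraNneq p0 => q1; apply/eqP; lra.
  - move=> x y H; apply/(HT x y H); exists (p, q); first exact: mem_head.
    have -> : p = 1 - q by rewrite -pq1 addrK.
    by rewrite /=; vring.
set v := sigma 'X^(size (sinv 0%R)) - Amap sigma sinv 'X^(size (sinv 0%R)).
have Hr := repr_all E.
exists (Amap sigma sinv), v; split; [|split].
- by apply: add_lin => x1 x2; apply: (Aadd E).
- apply: (@Bijective _ _ _ (fun Y => sinv (Y + v))).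
    by move=> x; rewrite /= -Hr c1.
  move=> Y; have := Hr (sinv (Y + v)); rewrite c2 /= => h.
  by apply: (@addIr _ v); rewrite -h.
- exact: Hr.
Qed.
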